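(* Let $R\xrightarrow{\partial}A\xrightarrow{p}B$ be a spatial fibrous preorder. For $a\in A$, put $N(a)=\{y\in B\mid aRy\}$. Let $\tau$ be the set of those $\mathcal{O}\subseteq B$ such that for every $y\in\mathcal{O}$ there is $a\in A$ with $p(a)=y$ and $N(a)\subseteq\mathcal{O}$. Then the following hold. 1. $\tau$ is a topology on $B$. 2. Let $R'\xrightarrow{\partial'}A'\xrightarrow{p'}B'$ be another spatial fibrous preorder, with topology $\tau'$ on $B'$ obtained in the same way. If $(f,f^* )$ is a fibrous morphism from the first to the second, then $f\colon(B,\tau)\to(B',\tau')$ is continuous. 3. For every $a\in A$, the set $N(a)$ belongs to $\tau$ and contains $p(a)$.
   Context: A fibrous preorder is a sequence $R\xrightarrow{\partial}A\xrightarrow{p}B$ consisting of the following data: - sets $A$ and $B$; - a map $p\colon A\to B$; - a relation $R\subseteq A\times B$ (write $aRb$ for $(a,b)\in R$); - a map $\partial\colon R\to A$. These must satisfy, for all $a\in A$ and $b,y\in B$ with $aRb$: - (F1) $p\partial(a,b)=b$; - (F2) $aRp(a)$ (this holds for all $a\in A$); - (F3) $\partial(a,b)Ry\Rightarrow aRy$. Such a fibrous preorder is called spatial if there exist maps $s\colon B\to A$ and $m\colon A\times_BA\to A$, where $A\times_BA=\{(a,a')\in A\times A\mid p(a)=p(a')\}$, such that for all $a,a'\in A$ with $p(a)=p(a')$ and all $y\in B$: - (F4) $ps(y)=y$; - (F5) $pm(a,a')=p(a)$; - (F6) $m(a,a')Ry\Rightarrow (aRy \text{ and } a'Ry)$.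 Given fibrous preorders $\mathbf{A}=(R,A,B,p,\partial)$ and $\mathbf{A}'=(R',A',B',p',\partial')$, a fibrous morphism $\mathbf{A}\to\mathbf{A}'$ is a pair $(f,f^* )$ with $f\colon B\to B'$ a map and $f^*\colon A'_f\to A$ a map, where $A'_f=\{(a',b)\in A'\times B\mid p'(a')=f(b)\}$. These must satisfy, for all $(a',b)\in A'_f$ and $y\in B$: - $pf^*(a',b)=b$; - $f^*(a',b)Ry\Rightarrow a'R'f(y)$. *)

(* Defs.v *)
(* A fibrous preorder R --d--> A --p--> B. The relation R ⊆ A × B is a
   Prop-valued predicate; d is defined on the subset R, i.e. on pairs
   (a,b) together with a proof that aRb. *)
Record fibrous_preorder (A B : Type) := FibrousPreorder {
  fp_p : A -> B;
  fp_R : A -> B -> Prop;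
  fp_d : {ab : A * B | fp_R (fst ab) (snd ab)} -> A;
  fp_F1 : forall (a : A) (b : B) (h : fp_R a b),
      fp_p (fp_d (exist _ (a, b) h)) = b;
  fp_F2 : forall a : A, fp_R a (fp_p a);
  fp_F3 : forall (a : A) (b y : B) (h : fp_R a b),
      fp_R (fp_d (exist _ (a, b) h)) y -> fp_R a y
}.

Arguments fp_p {A B} _ _.
Arguments fp_R {A B} _ _ _.
Arguments fp_d {A B} _ _.

Definition fiber_prod {A B : Type} (X : fibrous_preorder A B) : Type :=
  {aa : A * A | fp_p X (fst aa) = fp_p X (snd aa)}.

Definition spatial {A B : Type} (X : fibrous_preorder A B) : Prop :=
  exists (s : B -> A) (m : fiber_prod X -> A),
    (forall y : B, fp_p X (s y) = y) /\
    (forall aa : fiber_prod X, fp_p X (m aa) = fp_p X (fst (proj1_sig aa))) /\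
    (forall (aa : fiber_prod X) (y : B),
        fp_R X (m aa) y -> fp_R X (fst (proj1_sig aa)) y /\ fp_R X (snd (proj1_sig aa)) y).

Definition pullback_dom {B A' B' : Type} (X' : fibrous_preorder A' B')
  (f : B -> B') : Type :=
  {ab : A' * B | fp_p X' (fst ab) = f (snd ab)}.

Definition fibrous_morphism {A B A' B' : Type}
  (X : fibrous_preorder A B) (X' : fibrous_preorder A' B')
  (f : B -> B') (fstar : pullback_dom X' f -> A) : Prop :=
  (forall x : pullback_dom X' f, fp_p X (fstar x) = snd (proj1_sig x)) /\
  (forall (x : pullback_dom X' f) (y : B),
      fp_R X (fstar x) y -> fp_R X' (fst (proj1_sig x)) (f y)).

Definition nbhd {A B : Type} (X : fibrous_preorder A B) (a : A) : B -> Prop :=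
  fun y => fp_R X a y.

Definition tau {A B : Type} (X : fibrous_preorder A B) (O : B -> Prop) : Prop :=
  forall y : B, O y ->
    exists a : A, fp_p X a = y /\ (forall z : B, nbhd X a z -> O z).

Definition is_topology {B : Type} (T : (B -> Prop) -> Prop) : Prop :=
  T (fun _ => False) /\
  T (fun _ => True) /\
  (forall F : (B -> Prop) -> Prop,
      (forall U, F U -> T U) -> T (fun y => exists U, F U /\ U y)) /\
  (forall U V, T U -> T V -> T (fun y => U y /\ V y)).

Definition continuous {B B' : Type} (T : (B -> Prop) -> Prop)
  (T' : (B' -> Prop) -> Prop) (f : B -> B') : Prop :=
  forall U : B' -> Prop, T' U -> T (fun b => U (f b)).

(* Main.v *)
Require Import Defs.

Theorem mainTheorem2 (A B : Type) (X : fibrous_preorder A B) (hX : spatial X) :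
  is_topology (tau X) /\
  (forall (A' B' : Type) (X' : fibrous_preorder A' B'), spatial X' ->
     forall (f : B -> B') (fstar : pullback_dom X' f -> A),
       fibrous_morphism X X' f fstar ->
       continuous (tau X) (tau X') f) /\
  (forall a : A, tau X (nbhd X a) /\ nbhd X a (fp_p X a)).
Proof.
  destruct hX as [s [m [Hs [Hm HmR]]]].
  split; [|split].
  - unfold is_topology, tau. split; [|split; [|split]].
    + intros y [].
    + intros y _. exists (s y). split; auto.
    + intros F HF y [U [FU Uy]].
      destruct (HF U FU y Uy) as [a [Ha Hn]].
      exists a. split; auto. intros z Hz. exists U. split; auto.
    + intros U V HU HV y [Uy Vy].
      destruct (HU y Uy) as [a1 [H1 N1]].
      destruct (HV y Vy) as [a2 [H2 N2]].
      assert (e : fp_p X (fst (a1, a2)) = fp_p X (snd (a1, a2))) by (simpl; congruence).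
      exists (m (exist _ (a1, a2) e)). split.
      * rewrite Hm. simpl. auto.
      * intros z Hz. destruct (HmR _ _ Hz) as [Z1 Z2]. simpl in Z1, Z2. split; auto.
  - intros A' B' X' _ f fstar [Hp HR] U HU y Uy.
    destruct (HU (f y) Uy) as [a' [Ha' Na']].
    assert (e : fp_p X' (fst (a', y)) = f (snd (a', y))) by (simpl; auto).
    exists (fstar (exist _ (a', y) e)). split.
    + rewrite Hp. reflexivity.
    + intros z Hz. apply Na'. unfold nbhd. exact (HR _ _ Hz).
  - intros a. split.
    + intros y Hy. exists (fp_d X (exist _ (a, y) Hy)). split.
      * apply fp_F1.
      * intros z Hz. unfold nbhd in *. exact (fp_F3 _ _ X a y z Hy Hz).
    + apply fp_F2.
Qed.
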